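(* Let $f:\mathbb{R}^n\to\mathbb{R}$ be differentiable with $\nabla f$ $L$-Lipschitz continuous, and let $\alpha_k$ be the quantities computed in Algorithm 3 (at iterations with $\nabla f(x^k)\ne0$), with $0\le\beta\le1$. Then for every $k$, $$\alpha_k\ge\alpha_{\min}:=\frac{(1-\beta)\left(1-\frac{L\overline{h}}{4}\right)+\beta(1-\nu)}{2+2\beta^2\nu^2}.$$
   Context: Algorithm 3: parameters $0<\mu<\nu<1$, $0<\underline{h}<1\le\gamma_0^0\le\overline{h}<\frac4L$, $0\le\beta\le1$, $\theta\in(0,1)$, $\tau>1$, $\eta\in(0,2)$, starting point $x^0$; run while $\nabla f(x^k)\neq0$. At iteration $k$: for $\gamma>0$ let $z^k(\gamma)=x^k-\gamma\nabla f(x^k)$ and $r_k(\gamma)=\gamma\|\nabla f(z^k(\gamma))-\nabla f(x^k)\|/\|z^k(\gamma)-x^k\|$; starting from $\gamma_0^k$, while $r_k(\gamma_l^k)>\nu$ set $\gamma_{l+1}^k=\gamma_l^k\theta\min\{1,1/r_k(\gamma_l^k)\}$; let $h_k$ be the first $\gamma_l^k$ with $r_k(\gamma_l^k)\le\nu$. Then $z^k=x^k-h_k\nabla f(x^k)$ and $x^{k+1}=x^k-\eta\alpha_kh_k\big(\nabla f(x^k)-\beta(\nabla f(x^k)-\nabla f(z^k))\big)$ with $$\alpha_k=\frac{(1-\beta)\left(1-\frac{Lh_k}{4}\right)\|x^k-z^k\|^2+\beta\langle x^k-z^k,h_k\nabla f(z^k)\rangle}{h_k^2\|\nabla f(x^k)-\beta(\nabla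 f(x^k)-\nabla f(z^k))\|^2};$$ finally $\gamma_0^{k+1}=\mathbf{P}_{[\underline{h},\overline{h}]}(\tau h_k)$ if $r_k(h_k)\le\mu$, else $\gamma_0^{k+1}=\mathbf{P}_{[\underline{h},\overline{h}]}(h_k)$, where $\mathbf{P}_{[a,b]}$ is projection onto $[a,b]$. *)

(* Defs.v *)
From HB Require Import structures.
From mathcomp Require Import all_boot all_order all_algebra.
From mathcomp Require Import all_classical all_reals all_analysis.
Set Implicit Arguments. Unset Strict Implicit. Unset Printing Implicit Defensive.
Import Order.TTheory GRing.Theory Num.Theory.
Import numFieldNormedType.Exports.
Local Open Scope ring_scope.

Section Alg3.
Variables (R : realType) (n : nat).
Notation vec := 'rV[R]_n.

Definition dotv (u v : vec) : R := (u *m v^T) 0 0.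
Definition enorm (u : vec) : R := Num.sqrt (dotv u u).

Definition projI (a b t : R) : R := Num.min b (Num.max a t).

(* g plays the role of the gradient of f *)
Variable g : vec -> vec.

Definition zk (x : vec) (gam : R) : vec := x - gam *: g x.

Definition rk (x : vec) (gam : R) : R :=
  gam * enorm (g (zk x gam) - g x) / enorm (zk x gam - x).

Fixpoint bt (x : vec) (theta gam0 : R) (l : nat) : R :=
  match l with
  | 0%N => gam0
  | l'.+1 => let gam := bt x theta gam0 l' in
             gam * theta * Num.min 1 (1 / rk x gam)
  end.

Definition first_accept (x : vec) (theta nu gam0 h : R) : Prop :=
  exists l : nat, h = bt x theta gam0 l /\ rk x h <= nu /\
    forall l' : nat, (l' < l)%N -> nu < rk x (bt x theta gam0 l').

Definition alphak (L beta : R) (x : vec) (h : R) : R :=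
  let z := zk x h in
  ((1 - beta) * (1 - L * h / 4) * enorm (x - z) ^+ 2
     + beta * dotv (x - z) (h *: g z))
  / (h ^+ 2 * enorm (g x - beta *: (g x - g z)) ^+ 2).

(* A run of Algorithm 3: iterates x^k, initial trial steps gamma_0^k, and
   accepted steps h_k; the step relations are imposed at every iteration k
   that the algorithm reaches (grad f(x^j) <> 0 for all j <= k). *)
Definition alg3_run (L mu nu hlo hhi gam00 beta theta tau eta : R)
    (x : nat -> vec) (gam0 h : nat -> R) : Prop :=
  gam0 0%N = gam00 /\
  forall k : nat, (forall j : nat, (j <= k)%N -> g (x j) != 0) ->
    [/\ first_accept (x k) theta nu (gam0 k) (h k),
        x k.+1 = x k - (eta * alphak L beta (x k) (h k) * h k)
                         *: (g (x k) - beta *: (g (x k) - g (zk (x k) (h k))))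
      & gam0 k.+1 = if rk (x k) (h k) <= mu then projI hlo hhi (tau * h k)
                    else projI hlo hhi (h k)].

End Alg3.

(* Main.v *)
Require Import Defs.
From HB Require Import structures.
From mathcomp Require Import all_boot all_order all_algebra.
From mathcomp Require Import all_classical all_reals all_analysis.
From mathcomp Require Import ring lra.
Import Order.TTheory GRing.Theory Num.Theory.
Import numFieldNormedType.Exports.
Local Open Scope ring_scope.
Section Aux.
Variables (R : realType) (n : nat).
Implicit Types u v w : 'rV[R]_n.

Lemma dotE u v : dotv u v = \sum_i u 0 i * v 0 i.
Proof. by rewrite /dotv mxE; apply: eq_bigr => i _; rewrite mxE. Qed.
Lemma dotC u v : dotv u v = dotv v u.
Proof. by rewrite !dotE; apply: eq_bigr => i _; rewrite mulrC. Qed.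
Lemma dotDl u v w : dotv (u + v) w = dotv u w + dotv v w.
Proof. by rewrite !dotE -big_split; apply: eq_bigr => i _; rewrite mxE mulrDl. Qed.
Lemma dotZl a u v : dotv (a *: u) v = a * dotv u v.
Proof. by rewrite !dotE mulr_sumr; apply: eq_bigr => i _; rewrite mxE mulrA. Qed.
Lemma dotNl u v : dotv (- u) v = - dotv u v.
Proof. by rewrite !dotE -sumrN; apply: eq_bigr => i _; rewrite mxE mulNr. Qed.
Lemma dotDr u v w : dotv w (u + v) = dotv w u + dotv w v.
Proof. by rewrite dotC dotDl !(dotC w). Qed.
Lemma dotZr a u v : dotv v (a *: u) = a * dotv v u.
Proof. by rewrite dotC dotZl dotC. Qed.
Lemma dotNr u v : dotv v (- u) = - dotv v u.
Proof. by rewrite dotC dotNl dotC. Qed.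
Lemma dot_ge0 u : 0 <= dotv u u.
Proof. by rewrite dotE; apply: sumr_ge0 => i _; rewrite -expr2 sqr_ge0. Qed.
Lemma dot_eq0 u : dotv u u = 0 -> u = 0.
Proof.
rewrite dotE => /psumr_eq0P H; apply/matrixP => i j.
rewrite ord1 mxE; have /eqP := H (fun i _ => ltac:(by rewrite -expr2 sqr_ge0)) j isT.
by rewrite mulf_eq0 orbb => /eqP.
Qed.
Lemma enorm_sq u : enorm u ^+ 2 = dotv u u.
Proof. by rewrite /enorm sqr_sqrtr // dot_ge0. Qed.
Lemma enorm_ge0 u : 0 <= enorm u.
Proof. exact: sqrtr_ge0. Qed.
Lemma enormZ a u : enorm (a *: u) = `|a| * enorm u.
Proof.
rewrite /enorm dotZl dotZr mulrA -expr2 sqrtrM ?sqr_ge0 //.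
by rewrite sqrtr_sqr.
Qed.
Lemma enormN u : enorm (- u) = enorm u.
Proof. by rewrite /enorm dotNl dotNr opprK. Qed.
Lemma enorm_eq0 u : enorm u = 0 -> u = 0.
Proof. by move=> H; apply: dot_eq0; rewrite -enorm_sq H expr0n. Qed.
Lemma dot0l v : dotv 0 v = 0.
Proof. by rewrite dotE big1 // => i _; rewrite mxE mul0r. Qed.
Lemma CS u v : - (enorm u * enorm v) <= dotv u v.
Proof.
set A := enorm u; set B := enorm v.
have A0 : 0 <= A by exact: enorm_ge0.
have B0 : 0 <= B by exact: enorm_ge0.
have H := dot_ge0 (B *: u + A *: v).
rewrite !(dotDl, dotDr, dotZl, dotZr) -!enorm_sq -/A -/B (dotC v u) in H.
have [AB0|] := ltrP 0 (A * B).
  have : 0 <= (A * B) * (2 * (A * B + dotv u v)).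
    by rewrite -[X in _ <= X]/(_) ; nra.
  rewrite pmulr_rge0 // pmulr_rge0 //; lra.
rewrite le_eqVlt => /orP [/eqP|]; last by move=> /lt_le_trans /(_ (mulr_ge0 A0 B0)); rewrite ltxx.
move/eqP; rewrite mulf_eq0 => /orP [/eqP HA|/eqP HB].
  by rewrite (@enorm_eq0 u HA) dot0l HA mul0r oppr0.
by rewrite (@enorm_eq0 v HB) dotC dot0l HB mulr0 oppr0.
Qed.

Lemma pure (L nu hhi beta hh a c e A B : R) :
  0 < L -> L * hhi < 4 -> 0 < nu -> nu < 1 -> 0 <= beta -> beta <= 1 ->
  0 < hh -> hh <= hhi -> 0 < A -> a = A ^+ 2 -> 0 <= B -> e = B ^+ 2 ->
  B <= nu * A -> - (A * B) <= c -> 0 <= a - 2 * beta * c + beta ^+ 2 * e ->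
  ((1 - beta) * (1 - L * hhi / 4) + beta * (1 - nu))
      / (2 + 2 * beta ^+ 2 * nu ^+ 2)
  <= (hh ^+ 2 * ((1 - beta) * (1 - L * hh / 4) * a + beta * (a + c)))
     / (hh ^+ 2 * (a + 2 * beta * c + beta ^+ 2 * e)).
Proof.
move=> L0 Lh nu0 nu1 b0 b1 hh0 hhh A0 aE B0 eE BA cAB Hq.
have h2 : hh ^+ 2 != 0 by rewrite expf_neq0 // gt_eqF.
rewrite -mulf_div divff // mul1r.
set K := _ + _; set M := 2 + _.
have M0 : 0 < M by rewrite /M; nra.
have K0 : 0 <= K.
  have : 0 <= 1 - L * hhi / 4 by lra.
  rewrite /K; nra.
have bB : beta * B <= nu * A by nra.
have cAB' : 0 <= beta * (c + A * B) by nra.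
have D0 : 0 < a + 2 * beta * c + beta ^+ 2 * e.
  have : 0 < (A - beta * B) ^+ 2.
    by rewrite exprn_gt0 // subr_gt0; nra.
  rewrite aE eE; nra.
have N1 : K * a <= (1 - beta) * (1 - L * hh / 4) * a + beta * (a + c).
  have t1 : 0 <= (1 - beta) * a * (L * (hhi - hh)) by rewrite !mulr_ge0 //; nra.
  have t2 : beta * (A * B) <= beta * (nu * (A * A)) by rewrite ler_wpM2l //; nra.
  rewrite /K aE; rewrite aE in t1; nra.
have D1 : a + 2 * beta * c + beta ^+ 2 * e <= M * a.
  have t3 : B ^+ 2 <= nu ^+ 2 * A ^+ 2 by rewrite -exprMn; apply: lerXn2r; rewrite ?nnegrE //; nra.
  have t4 : 0 <= (A - beta * B) ^+ 2 by apply: sqr_ge0.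
  have t5 : beta ^+ 2 * B ^+ 2 <= beta ^+ 2 * (nu ^+ 2 * A ^+ 2) by rewrite ler_wpM2l // sqr_ge0.
  rewrite /M aE eE; nra.
rewrite ler_pdivrMr // mulrAC ler_pdivlMr //.
apply: (le_trans (ler_wpM2l K0 D1)).
rewrite mulrCA mulrC; apply: ler_wpM2r => //; exact: ltW.

Qed.

Variable g : 'rV[R]_n -> 'rV[R]_n.

Lemma rk_ge0 y gam : 0 <= gam -> 0 <= rk g y gam.
Proof. by move=> ?; rewrite /rk divr_ge0 ?mulr_ge0 ?enorm_ge0. Qed.

Lemma bt_pos y theta gam0 nu l : 0 < gam0 -> 0 < nu -> 0 < theta -> theta < 1 ->
  (forall l', (l' < l)%N -> nu < rk g y (bt g y theta gam0 l')) ->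
  0 < bt g y theta gam0 l <= gam0.
Proof.
move=> g0 nu0 t0 t1; elim: l => [|l IH] H; first by rewrite g0 lexx.
have /andP [b0 b1] := IH (fun l' hl => H l' (ltn_trans hl (ltnSn _))).
have r0 : nu < rk g y (bt g y theta gam0 l) := H l (ltnSn _).
have rp : 0 < rk g y (bt g y theta gam0 l) by apply: lt_trans r0.
rewrite /=; set r := rk _ _ _ in r0 rp *.
have m0 : 0 < Num.min 1 (1 / r) by rewrite lt_min ltr01 divr_gt0.
have m1 : Num.min 1 (1 / r) <= 1 by rewrite ge_min lexx.
apply/andP; split; first by rewrite !mulr_gt0.
apply: le_trans b1; rewrite -mulrA ler_piMr //.
- exact: ltW.
- by rewrite mulr_ile1 // ltW.
Qed.
End Aux.

Theorem lemma7 (R : realType) (n : nat) (f : 'rV[R]_n -> R)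
    (g : 'rV[R]_n -> 'rV[R]_n) (L : R)
    (mu nu hlo hhi gam00 beta theta tau eta : R)
    (x : nat -> 'rV[R]_n) (gam0 h : nat -> R) :
  (* f differentiable with gradient g *)
  (forall y : 'rV[R]_n, differentiable f y /\
     forall v : 'rV[R]_n, 'd f y v = dotv (g y) v) ->
  (* gradient L-Lipschitz (Euclidean norm) *)
  0 < L ->
  (forall y1 y2 : 'rV[R]_n, enorm (g y1 - g y2) <= L * enorm (y1 - y2)) ->
  (* parameters of Algorithm 3 *)
  0 < mu -> mu < nu -> nu < 1 ->
  0 < hlo -> hlo < 1 -> 1 <= gam00 -> gam00 <= hhi -> hhi < 4 / L ->
  0 <= beta -> beta <= 1 ->
  0 < theta -> theta < 1 -> 1 < tau -> 0 < eta -> eta < 2 ->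
  alg3_run g L mu nu hlo hhi gam00 beta theta tau eta x gam0 h ->
  forall k : nat, (forall j : nat, (j <= k)%N -> g (x j) != 0) ->
    ((1 - beta) * (1 - L * hhi / 4) + beta * (1 - nu))
      / (2 + 2 * beta ^+ 2 * nu ^+ 2)
    <= alphak g L beta (x k) (h k).
Proof.
move=> _ L0 _ mu0 munu nu1 hlo0 hlo1 g1 ghhi hhiL b0 b1 t0 t1 tau1 e0 e2 [g00 run] k Hk.
have Lh : L * hhi < 4 by rewrite mulrC -ltr_pdivlMr.
have hlohhi : hlo <= hhi by lra.
have nu0 : 0 < nu by lra.
have G0 : hlo <= gam0 k <= hhi.
  case: k Hk => [|k] Hk; first by rewrite g00; apply/andP; split; lra.
  have [_ _ ->] := run k (fun j hj => Hk j (leq_trans hj (leqnSn _))).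
  have projP t : hlo <= projI hlo hhi t <= hhi.
    by rewrite /projI le_min ge_min le_max !lexx hlohhi.
  by case: ifP.
have [fa _ _] := run k Hk.
case: fa => l [hE [rle Hl]].
have /andP [h0 hg] := @bt_pos R n g (x k) theta (gam0 k) nu l ltac:(lra) nu0 t0 t1 Hl.
rewrite -hE in h0 hg.
have hhi' : h k <= hhi by lra.
move: rle h0 hhi'; set y := x k; set hh := h k => rle h0 hhi'.
have GN : g y != 0 by apply: Hk.
rewrite /alphak.
set G := g y in GN rle *.
set Gz := g (zk g y hh) in rle *.
have xz : y - zk g y hh = hh *: G by rewrite /zk opprB addrCA subrr addr0.
have zx : zk g y hh - y = - (hh *: G) by rewrite /zk addrAC subrr add0r.
set D := Gz - G.
have GzE : Gz = G + D by rewrite /D addrC subrK.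
have A0 : 0 < enorm G.
  rewrite lt_neqAle enorm_ge0 andbT eq_sym; apply/eqP => /enorm_eq0 E.
  by rewrite E eqxx in GN.
move: rle; rewrite /rk -/G -/Gz -/D zx enormN enormZ gtr0_norm //.
rewrite -mulf_div divff ?gt_eqF // mul1r ler_pdivrMr // => BA.
clearbody D.
have CS1 := CS R n G D.
have Hq := dot_ge0 R n (G - beta *: D).
rewrite !(dotDl, dotDr, dotNl, dotNr, dotZl, dotZr) (dotC R n D G) in Hq.
rewrite xz GzE !enorm_sq.
rewrite !(dotDl, dotDr, dotNl, dotNr, dotZl, dotZr) (dotC R n D G).
apply: le_trans (@pure R _ _ _ _ _ _ _ _ _ _ L0 Lh nu0 nu1 b0 b1 h0 hhi' A0 (esym (enorm_sq R n G)) (enorm_ge0 R n D) (esym (enorm_sq R n D)) BA CS1 _) _.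
  lra.
rewrite le_eqVlt; apply/orP; left; apply/eqP; congr (_ / _); ring.
Qed.
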